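(* Let $X = X_1 \times \dots \times X_d$ be a product of finite sets, and let $\big((\overline{Y}_S, \overline{Y}^{\,\circ}_S, F_S, A_S)\,:\, S \subseteq [d]\big)$ be an additive-restrictive system on $X$. Let $\delta$ be the density of $\overline{Y}^{\,\circ}_{\emptyset}$ in $X$, and let $|A|$ be the maximum of $|A_S|$ over $S\subseteq[d]$. Then for every $S \subseteq [d]$, the density of $\overline{Y}^{\,\circ}_{S}$ in $\overline{X}_{S}$ is at least $\delta^{2^{|S|}}|A|^{-3^{|S|}}$.
   Context: $[d]=\{1,\dots,d\}$. For $S \subseteq [d]$, $\overline{X}_S = \prod_{i=1}^d W_i$ where $W_i = X_i\times X_i$ if $i \in S$ and $W_i = X_i$ otherwise; $\pi_i$ is projection to the $i$-th factor, and on $X_i\times X_i$ the two projections are $\pi_0,\pi_1$. For $S_0\subseteq[d]$, $\pi_{S_0}$ is projection to the factors indexed by $S_0$. For $\bar x\in\overline{X}_S$ and $T\subseteq S$, with $U=S-T$, set $\widehat{x}(T)=\{\bar y\in\overline{X}_T : \pi_i(\bar y)\in\{\pi_0(\pi_i(\bar x)),\pi_1(\pi_i(\bar x))\}\text{ for } i\in U,\ \pi_{[d]-U}(\bar y)=\pi_{[d]-U}(\bar x)\}$. An additive-restrictive system is a family $(\overline{Y}_S,\overline{Y}^{\,\circ}_S,F_S,A_S)_{S\subseteq[d]}$ such that: each $A_S$ is an abelian group, $\overline{Y}^{\,\circ}_S\subseteq\overline{Y}_S\subseteq\overline{X}_S$, and $F_S:\overline{Y}_S\to A_S$ is a function with $F_S^{-1}(0)=\overline{Y}^{\,\circ}_S$;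 for nonempty $S$, $\overline{Y}_S=\{\bar x\in\overline{X}_S:\widehat{x}(T)\subseteq\overline{Y}^{\,\circ}_T\text{ for all } T\subsetneq S\}$; and (additivity) whenever $s\in S$ and $\bar x_1,\bar x_2,\bar x_3\in\overline{Y}_S$ agree in all coordinates other than $s$ and satisfy $\pi_s(\bar x_1)=(p_1,p_2)$, $\pi_s(\bar x_2)=(p_2,p_3)$, $\pi_s(\bar x_3)=(p_1,p_3)$ for some $p_1,p_2,p_3\in X_s$, we have $F_S(\bar x_1)+F_S(\bar x_2)=F_S(\bar x_3)$. *)

(* Defs.v *)
From HB Require Import structures.
From mathcomp Require Import all_boot all_order all_algebra.
Set Implicit Arguments. Unset Strict Implicit. Unset Printing Implicit Defensive.
Import Order.TTheory GRing.Theory Num.Theory.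

Section ARS.
Variables (d : nat) (X : 'I_d -> finType).

Definition W (S : {set 'I_d}) (i : 'I_d) : finType :=
  if i \in S then ((X i * X i)%type : finType) else X i.

Definition Xbar (S : {set 'I_d}) : finType := {dffun forall i : 'I_d, W S i}.

(* first / second component of a coordinate (both equal to the coordinate
   itself when i \notin S) *)
Definition pi0 (S : {set 'I_d}) (i : 'I_d) : W S i -> X i :=
  if i \in S as b return (Finite.sort (if b then ((X i * X i)%type : finType) else X i) -> X i)
  then fun p => p.1 else fun x => x.
Definition pi1 (S : {set 'I_d}) (i : 'I_d) : W S i -> X i :=
  if i \in S as b return (Finite.sort (if b then ((X i * X i)%type : finType) else X i) -> X i)
  then fun p => p.2 else fun x => x.

Definition xhat (S T : {set 'I_d}) (x : Xbar S) : {set Xbar T} :=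
  [set y : Xbar T | [forall i : 'I_d,
     if i \in S :\: T then
       (pi0 (y i) == pi0 (x i)) || (pi0 (y i) == pi1 (x i))
     else
       (pi0 (y i) == pi0 (x i)) && (pi1 (y i) == pi1 (x i))]].

Definition additive_restrictive_system
  (A : {set 'I_d} -> finZmodType)
  (Y Yo : forall S : {set 'I_d}, {set Xbar S})
  (F : forall S : {set 'I_d}, Xbar S -> A S) : Prop :=
  (forall S : {set 'I_d}, Yo S \subset Y S) /\
  (forall (S : {set 'I_d}) (x : Xbar S), x \in Y S -> ((F S x = 0)%R <-> x \in Yo S)) /\
  (forall S : {set 'I_d}, S != set0 ->
     forall x : Xbar S,
       x \in Y S <-> (forall T : {set 'I_d}, T \proper S -> xhat T x \subset Yo T)) /\
  (forall (S : {set 'I_d}) (s : 'I_d), s \in S ->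
     forall (x1 x2 x3 : Xbar S) (p1 p2 p3 : X s),
       x1 \in Y S -> x2 \in Y S -> x3 \in Y S ->
       (forall j, j != s -> x1 j = x2 j /\ x1 j = x3 j) ->
       pi0 (x1 s) = p1 -> pi1 (x1 s) = p2 ->
       pi0 (x2 s) = p2 -> pi1 (x2 s) = p3 ->
       pi0 (x3 s) = p1 -> pi1 (x3 s) = p3 ->
       (F S x1 + F S x2 = F S x3)%R).

(* density of B in Xbar S, as a rational (0 if Xbar S is empty) *)
Definition density (S : {set 'I_d}) (B : {set Xbar S}) : rat :=
  (#|B|%:R / #|Xbar S|%:R)%R.

End ARS.

(* Main.v *)
Require Import Defs.
From HB Require Import structures.
From mathcomp Require Import all_boot all_order all_algebra.
From mathcomp Require Import zify.
Set Implicit Arguments. Unset Strict Implicit. Unset Printing Implicit Defensive.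
Import Order.TTheory GRing.Theory Num.Theory.

Section Emb.
Variables (d : nat) (X : 'I_d -> finType).

Definition embi (V : {set 'I_d}) (i : 'I_d) (a : X i * X i) : W X V i :=
  if i \in V as b return Finite.sort (if b then ((X i * X i)%type : finType) else X i)
  then a else a.1.
Arguments embi V i a : clear implicits.

Definition emb (V : {set 'I_d}) (u : forall i, X i * X i) : Xbar X V :=
  [ffun i : 'I_d => embi V i (u i)].

Lemma pi0_embi V i a : pi0 (embi V i a) = a.1.
Proof. by rewrite /pi0 /embi; case: (i \in V). Qed.

Lemma pi1_embi V i a : pi1 (embi V i a) = if i \in V then a.2 else a.1.
Proof. by rewrite /pi1 /embi; case: (i \in V). Qed.

Lemma pi1_notin V i (x : W X V i) : i \notin V -> pi1 x = pi0 x.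
Proof. move: x; rewrite /pi1 /pi0 /W; case: (i \in V) => //. Qed.

Lemma W_ext V i (x y : W X V i) : pi0 x = pi0 y -> pi1 x = pi1 y -> x = y.
Proof.
move: x y; rewrite /pi1 /pi0 /W; case: (i \in V) => /=.
  by move=> [a b] [c e] /= -> ->.
by move=> a c ->.
Qed.

Lemma Xbar_ext V (x y : Xbar X V) :
  (forall i, pi0 (x i) = pi0 (y i) /\ pi1 (x i) = pi1 (y i)) -> x = y.
Proof. move=> H; apply/ffunP => i; case: (H i) => h0 h1; exact: W_ext. Qed.

Lemma pi0_emb V u i : pi0 (emb V u i) = (u i).1.
Proof. by rewrite ffunE pi0_embi. Qed.
Lemma pi1_emb V u i : pi1 (emb V u i) = if i \in V then (u i).2 else (u i).1.
Proof. by rewrite ffunE pi1_embi. Qed.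

Definition liftx V (x : Xbar X V) i : X i * X i := (pi0 (x i), pi1 (x i)).
Definition dup i (a : X i) : X i * X i := (a, a).
Definition sel i (b : bool) (a : X i * X i) : X i := if b then a.2 else a.1.

Lemma emb_liftx V (x : Xbar X V) : emb V (liftx x) = x.
Proof.
apply: Xbar_ext => i; rewrite pi0_emb pi1_emb /liftx /=; split=> //.
by case: ifP => // /negbT /pi1_notin ->.
Qed.

Lemma emb_eq V u u' : (forall i, u i = u' i) -> emb V u = emb V u'.
Proof. by move=> H; apply/ffunP=> i; rewrite !ffunE H. Qed.

Lemma xhatP S0 T0 (x : Xbar X S0) (v : Xbar X T0) :
  reflect (forall i, if i \in S0 :\: T0 then
       (pi0 (v i) == pi0 (x i)) || (pi0 (v i) == pi1 (x i))
     else (pi0 (v i) == pi0 (x i)) && (pi1 (v i) == pi1 (x i)))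
   (v \in xhat T0 x).
Proof. by rewrite inE; apply: forallP. Qed.

Lemma xhat_self V (x v : Xbar X V) : v \in xhat V x -> v = x.
Proof.
move/xhatP=> H; apply: Xbar_ext => i; move: (H i); rewrite setDv inE.
by case/andP => /eqP -> /eqP ->.
Qed.
End Emb.

Lemma cs_nat (I : finType) (P : {set I}) (a : I -> nat) :
  (\sum_(i in P) a i) ^ 2 <= #|P| * \sum_(i in P) a i ^ 2.
Proof.
rewrite -(leq_pmul2l (isT : 0 < 2)) expnS expn1 big_distrlr /= big_distrr /=.
apply: (@leq_trans (\sum_(i in P) \sum_(j in P) (a i ^ 2 + a j ^ 2))).
  apply: leq_sum => i _; rewrite big_distrr /=; apply: leq_sum => j _.
  exact: (nat_Cauchy _ _).1.
under eq_bigr do rewrite big_split /= sum_nat_const.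
rewrite big_split /= -big_distrr /= sum_nat_const.
by rewrite mul2n -addnn.
Qed.

Lemma pairs_card (T U : finType) (B : {set T}) (g : T -> U) :
  #|B| ^ 2 <= #|[set yy in setX B B | g yy.1 == g yy.2]| * #|g @: B|.
Proof.
set G := g @: B.
pose n v := #|[set y in B | g y == v]|.
have part : forall h : T -> nat, \sum_(y in B) h y = \sum_(v in G) \sum_(y in B | g y == v) h y.
  move=> h; rewrite (partition_big g (mem G)) => [|y yB]; last exact: imset_f.
  by [].
have cB : #|B| = \sum_(v in G) n v.
  rewrite -sum1_card part; apply: eq_bigr => v _.
  by rewrite /n -sum1_card; apply: eq_bigl => y; rewrite !inE.
have cP : #|[set yy in setX B B | g yy.1 == g yy.2]| = \sum_(v in G) n v ^ 2.
  rewrite -sum1_card.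
  transitivity (\sum_(y1 in B) \sum_(y2 in B | g y2 == g y1) 1).
    rewrite pair_big_dep /=; apply: eq_bigl => -[y1 y2]; rewrite !inE /=.
    by rewrite [g y2 == _]eq_sym andbA.
  transitivity (\sum_(y1 in B) n (g y1)).
    by apply: eq_bigr => y1 y1B; rewrite /n -sum1_card; apply: eq_bigl => y2; rewrite !inE.
  rewrite part; apply: eq_bigr => v _.
  rewrite (eq_bigr (fun _ => n v)); last by move=> y /andP [_ /eqP ->].
  rewrite sum_nat_const.
  have -> : #|[pred y in B | g y == v]| = n v by apply: eq_card => y; rewrite !inE.
  by rewrite expnS expn1.
by rewrite cB cP mulnC; apply: leq_trans (cs_nat _ _) _; rewrite /G.
Qed.

Local Open Scope ring_scope.
Lemma rat_ineq (a N K Y M : nat) : (0 < N)%N -> (0 < K)%N -> (0 < M)%N ->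
  (a ^ 2 * M <= Y * N ^ 2 * K)%N ->
  (a%:R / N%:R) ^+ 2 / K%:R <= Y%:R / M%:R :> rat.
Proof.
move=> hN hK hM h.
have hNK : 0 < (N ^ 2 * K)%:R :> rat by rewrite ltr0n muln_gt0 expn_gt0 hN hK.
rewrite expr_div_n -mulrA -invfM -!natrX -natrM ler_pdivrMr // mulrAC.
rewrite ler_pdivlMr ?ltr0n // -!natrM ler_nat.
by rewrite mulnA.
Qed.

Lemma pow_id (x y : rat) (n : nat) :
  x ^+ (2 ^ n.+1) / y ^+ (3 ^ n.+1) = (x ^+ (2 ^ n) / y ^+ (3 ^ n)) ^+ 2 / y ^+ (3 ^ n).
Proof.
rewrite !expnSr !exprM expr_div_n.
set Y := y ^+ (3 ^ n); set Z := x ^+ (2 ^ n) ^+ 2.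
by rewrite exprSr invfM mulrA.
Qed.
Local Close Scope ring_scope.

Section Main.
Variables (d : nat) (X : 'I_d -> finType) (A : {set 'I_d} -> finZmodType)
  (Y Yo : forall S : {set 'I_d}, {set Xbar X S})
  (F : forall S : {set 'I_d}, Xbar X S -> A S).
Arguments Y : clear implicits. Arguments Yo : clear implicits. Arguments F : clear implicits.
Hypothesis HYo : forall S : {set 'I_d}, Yo S \subset Y S.
Hypothesis HF : forall (S : {set 'I_d}) (x : Xbar X S), x \in Y S -> ((F S x = 0)%R <-> x \in Yo S).
Hypothesis HY : forall S : {set 'I_d}, S != set0 ->
     forall x : Xbar X S,
       x \in Y S <-> (forall T : {set 'I_d}, T \proper S -> xhat T x \subset Yo T).
Hypothesis Hadd : forall (S : {set 'I_d}) (s : 'I_d), s \in S ->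
     forall (x1 x2 x3 : Xbar X S) (p1 p2 p3 : X s),
       x1 \in Y S -> x2 \in Y S -> x3 \in Y S ->
       (forall j, j != s -> x1 j = x2 j /\ x1 j = x3 j) ->
       pi0 (x1 s) = p1 -> pi1 (x1 s) = p2 ->
       pi0 (x2 s) = p2 -> pi1 (x2 s) = p3 ->
       pi0 (x3 s) = p1 -> pi1 (x3 s) = p3 ->
       (F S x1 + F S x2 = F S x3)%R.

Variables (S : {set 'I_d}) (s : 'I_d).
Hypothesis hs : s \in S.
Local Notation T := (S :\ s).

Definition setc (u : forall i, X i * X i) (a : X s * X s) : forall i, X i * X i :=
  @dfwith _ (fun i => (X i * X i)%type) u s a.

Lemma setc_s u a : setc u a s = a.
Proof. exact: dfwith_in. Qed.
Lemma setc_ne u a i : i != s -> setc u a i = u i.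
Proof. by move=> ne; apply: dfwith_out; rewrite eq_sym. Qed.

Definition upd (k : Xbar X T) (p : X s) : Xbar X T := emb T (setc (liftx k) (p, p)).

Lemma sNT : s \notin T. Proof. by rewrite !inE eqxx. Qed.

Lemma pi0_upd_s k p : pi0 (upd k p s) = p.
Proof. by rewrite pi0_emb setc_s. Qed.
Lemma pi1_upd_s k p : pi1 (upd k p s) = p.
Proof. by rewrite pi1_emb setc_s (negbTE sNT). Qed.
Lemma pi0_upd_ne k p i : i != s -> pi0 (upd k p i) = pi0 (k i).
Proof. by move=> ne; rewrite pi0_emb setc_ne. Qed.
Lemma pi1_upd_ne k p i : i != s -> pi1 (upd k p i) = pi1 (k i).
Proof.
move=> ne; rewrite pi1_emb setc_ne //=; case: ifP => // /negbT /pi1_notin ->; done.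
Qed.

Lemma upd_upd k p r : upd (upd k p) r = upd k r.
Proof.
apply: Xbar_ext => i; have [->|ne] := eqVneq i s.
  by rewrite !pi0_upd_s !pi1_upd_s.
by rewrite !pi0_upd_ne // !pi1_upd_ne.
Qed.

Lemma upd_self k : upd k (pi0 (k s)) = k.
Proof.
apply: Xbar_ext => i; have [->|ne] := eqVneq i s.
  by rewrite pi0_upd_s pi1_upd_s (pi1_notin _ sNT).
by rewrite pi0_upd_ne // pi1_upd_ne.
Qed.

Definition Cty := {dffun forall i : 'I_d, option bool}.
Definition Cv : {set Cty} :=
  setXn (fun i : 'I_d => if i \in T then [set: option bool] else [set None]).

Lemma CvP (c : Cty) : reflect (forall i, i \notin T -> c i = None) (c \in Cv).
Proof.
apply: (iffP setXnP) => H i.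
  by move=> niT; move: (H i); rewrite (negbTE niT) inE => /eqP.
by case: ifP => [_|/negbT /H ->]; rewrite inE.
Qed.

Definition Tc (c : Cty) : {set 'I_d} := [set i in S | c i == None].

Definition wu (k : Xbar X T) (c : Cty) (p q : X s) : forall i, X i * X i :=
  setc (fun i => match c i with Some b => dup (sel b (liftx k i)) | None => liftx k i end) (p, q).

Definition w k c p q : Xbar X (Tc c) := emb (Tc c) (wu k c p q).

Lemma wu_s k c p q : wu k c p q s = (p, q).
Proof. exact: setc_s. Qed.
Lemma wu_ne k c p q i : i != s ->
  wu k c p q i = match c i with Some b => dup (sel b (liftx k i)) | None => liftx k i end.
Proof. exact: setc_ne. Qed.

Lemma s_Tc c : c \in Cv -> s \in Tc c.
Proof. by move/CvP/(_ s sNT) => h; rewrite inE hs h eqxx. Qed.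


Lemma sub_cond (k : Xbar X T) (c : Cty) (p q : X s) :
  c \in Cv -> upd k p \in Yo T -> upd k q \in Yo T ->
  (forall c', c' \in Cv -> #|Tc c'| < #|Tc c| -> w k c' p q \in Yo (Tc c')) ->
  w k c p q \in Y (Tc c).
Proof.
move=> cCv hp hq hlow.
have sTc := s_Tc cCv.
have ne0 : Tc c != set0 by apply/set0Pn; exists s.
have cN := CvP _ cCv.
apply/(HY ne0) => T3 prT3; apply/subsetP => v /xhatP hv.
have T3N : forall i, i \in T3 -> (i \in S) && (c i == None).
  by move=> i /(subsetP (proper_sub prT3)); rewrite inE.
case: (boolP (s \in T3)) => sT3.
  pose c' : Cty := [ffun i => if (i \in S) && (i \notin T3) then
     (if c i is Some b then Some b else Some (pi0 (v i) != pi0 (k i))) else None].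
  have c'Cv : c' \in Cv.
    apply/CvP => i niT; rewrite ffunE; case: ifP => // /andP [iS niT3].
    move: niT; rewrite !inE iS andbT negbK => /eqP e; subst i.
    by rewrite sT3 in niT3.
  have Tc' : Tc c' = T3.
    apply/setP => i; rewrite !inE ffunE.
    case iS: (i \in S) => /=.
      by case iT3: (i \in T3) => /=; [rewrite eqxx | case: (c i)].
    by case iT3: (i \in T3) => //; move: (T3N i iT3); rewrite iS.
  have lt : #|Tc c'| < #|Tc c| by rewrite Tc'; exact: proper_card.
  have := hlow c' c'Cv lt.
  have -> : v = emb T3 (wu k c' p q).
    apply: Xbar_ext => i; rewrite pi0_emb pi1_emb.
    have [-> | ne] := eqVneq i s.
      move: (hv s); rewrite /w pi0_emb pi1_emb !wu_s sTc !inE sT3 /=.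
      by case/andP => /eqP -> /eqP ->.
    move: (hv i); rewrite /w !pi0_emb !pi1_emb !wu_ne // /c' ffunE !inE.
    case iS: (i \in S); case iT3: (i \in T3); case ci: (c i) => [b|] /=;
      rewrite ?ne ?iS ?iT3 ?ci /=.
    - by move: (T3N i iT3); rewrite ci andbF.
    - by case/andP => /eqP -> /eqP ->.
    - by case/andP => /eqP -> /eqP ->.
    - rewrite (pi1_notin (v i)) ?iT3 // /sel /liftx /=.
      have [e|ne'] := eqVneq (pi0 (v i)) (pi0 (k i)); first by rewrite /= e.
      by move=> /= /eqP ->.
    - by move: (T3N i iT3); rewrite iS.
    - by move: (T3N i iT3); rewrite iS.
    - by rewrite cN // !inE iS andbF in ci.
    - by case/andP => /eqP -> /eqP ->.
  have tr : forall V V', V = V' -> forall u, emb V u \in Yo V -> emb V' u \in Yo V'.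
    by move=> V V' ->.
  exact: tr.
have T3T : T3 \subset T.
  apply/subsetP => i iT3; rewrite !inE; case/andP: (T3N i iT3) => -> _; rewrite andbT.
  by apply: contraNneq sT3 => <-.
set r := pi0 (v s).
have hr : upd k r \in Yo T.
  move: (hv s); rewrite /w pi0_emb pi1_emb wu_s sTc !inE sT3 hs (cN _ sNT) eqxx /= -/r.
  by case/orP => /eqP ->.
have vin : v \in xhat T3 (upd k r).
  apply/xhatP => i; have [-> | ne] := eqVneq i s.
    rewrite !inE eqxx /= andbF /= pi0_upd_s pi1_upd_s -/r eqxx /=.
    by rewrite (pi1_notin _ sT3).
  rewrite pi0_upd_ne // pi1_upd_ne //.
  move: (hv i); rewrite /w !pi0_emb !pi1_emb !wu_ne // !inE ne.
  case iS: (i \in S); case iT3: (i \in T3); case ci: (c i) => [b|] /=;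
    rewrite ?ci /=.
  - by move: (T3N i iT3); rewrite ci andbF.
  - by [].
  - by case/andP => /eqP -> _; rewrite /sel /liftx /=; move: ci; case: b => _; rewrite eqxx ?orbT.
  - by [].
  - by move: (T3N i iT3); rewrite iS.
  - by move: (T3N i iT3); rewrite iS.
  - by rewrite cN // !inE iS andbF in ci.
  - case/andP => /eqP -> /eqP ->; rewrite /liftx /= eqxx /=.
    by rewrite (pi1_notin (k i)) // !inE iS andbF.
case: (eqVneq T3 T) => [eT | neT].
  subst T3; by rewrite (xhat_self vin).
have prT : T3 \proper T by rewrite properEneq neT T3T.
have Tne : T != set0.
  by rewrite -proper0; exact: sub_proper_trans (sub0set T3) prT.
have := (HY Tne (upd k r)).1 (subsetP (HYo T) _ hr) T3 prT.
by move/subsetP; apply.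
Qed.

Lemma add_cond k c r p q : c \in Cv ->
  w k c r p \in Y (Tc c) -> w k c p q \in Y (Tc c) -> w k c r q \in Y (Tc c) ->
  (F _ (w k c r p) + F _ (w k c p q) = F _ (w k c r q))%R.
Proof.
move=> cCv h1 h2 h3; have sTc := s_Tc cCv.
apply: (Hadd sTc h1 h2 h3).
- by move=> j ne; rewrite /w !ffunE !wu_ne.
all: by rewrite /w ?pi0_emb ?pi1_emb wu_s ?sTc.
Qed.


Definition cardA := (\max_(V : {set 'I_d}) #|A V|)%N.
Definition enc V (a : A V) : 'I_cardA.+1 := inord (enum_rank a).
Definition KT := {ffun Cty -> 'I_cardA.+1}.
Definition Iset : {set 'I_cardA.+1} := [set inord (nat_of_ord j) | j : 'I_cardA].

Lemma cardA_ge V : #|A V| <= cardA.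
Proof. by rewrite /cardA; apply: (@leq_bigmax _ (fun V => #|A V|)). Qed.

Lemma enc_val V (a : A V) : nat_of_ord (enc a) = enum_rank a.
Proof.
rewrite /enc inordK //; apply: leq_trans (ltn_ord (enum_rank a)) _.
exact: leq_trans (cardA_ge V) (leqnSn _).
Qed.

Lemma enc_inj V (a b : A V) : enc a = enc b -> a = b.
Proof.
move=> /(congr1 (@nat_of_ord _)); rewrite !enc_val => /val_inj; exact: enum_rank_inj.
Qed.

Lemma enc_I V (a : A V) : enc a \in Iset.
Proof.
apply/imsetP; exists (widen_ord (cardA_ge V) (enum_rank a)).
  by []. by apply: val_inj; rewrite /= enc_val.
Qed.

Lemma card_I : #|Iset| <= cardA.
Proof. by apply: leq_trans (leq_imset_card _ _) _; rewrite card_ord. Qed.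

Lemma key_ex n : forall D : {set Cty}, #|D| = n -> D \subset Cv ->
  (forall c c', c \in D -> c' \in Cv -> #|Tc c'| < #|Tc c| -> c' \in D) ->
  exists key : Xbar X T -> X s -> KT, exists R : {set KT},
   [/\ #|R| <= cardA ^ n, (forall k p, key k p \in R),
       (forall k p c, c \notin D -> key k p c = ord0) &
       (forall k p q, upd k p \in Yo T -> upd k q \in Yo T -> key k p = key k q ->
           forall c, c \in D -> w k c p q \in Yo (Tc c))].
Proof.
elim: n => [|n IH] D hD DCv Dcl.
  exists (fun _ _ => [ffun => ord0]), [set [ffun => ord0]]; split.
  - by rewrite cards1.
  - by move=> k p; rewrite inE.
  - by move=> k p c _; rewrite ffunE.
  - by move=> k p q _ _ _ c; move/eqP: hD; rewrite cards_eq0 => /eqP ->; rewrite inE.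
have [c0 c0D] : exists c0, c0 \in D.
  by apply/set0Pn; rewrite -cards_eq0 hD.
have [c cD cmax] : exists2 c, c \in D & forall j, j \in D -> #|Tc j| <= #|Tc c|.
  by case: (arg_maxnP (fun c => #|Tc c|) c0D) => c ? ?; exists c.
set D' := D :\ c.
have cD' : #|D'| = n by move: hD; rewrite (cardsD1 c) cD => -[].
have D'Cv : D' \subset Cv by apply: subset_trans DCv; apply: subsetDl.
have D'cl : forall c1 c', c1 \in D' -> c' \in Cv -> #|Tc c'| < #|Tc c1| -> c' \in D'.
  move=> c1 c' /setD1P [_ c1D] c'Cv lt; rewrite !inE (Dcl c1 c' c1D c'Cv lt) andbT.
  apply: contraTneq lt => ->; rewrite -leqNgt; exact: cmax.
have [key' [R' [hR' hkR' hk0' hkey']]] := IH D' cD' D'Cv D'cl.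
pose rep k p := odflt p [pick q | (upd k q \in Yo T) && (key' k q == key' k p)].
pose key k p : KT := [ffun c1 => if c1 == c then enc (F _ (w k c (rep k p) p)) else key' k p c1].
pose g := fun fi : KT * 'I_cardA.+1 => ([ffun c1 => if c1 == c then fi.2 else fi.1 c1] : KT).
exists key, (g @: setX R' Iset); split.
- apply: leq_trans (leq_imset_card _ _) _; rewrite cardsX expnSr.
  exact: leq_mul hR' card_I.
- move=> k p; apply/imsetP; exists (key' k p, enc (F _ (w k c (rep k p) p))).
    by rewrite inE /= hkR' enc_I.
  by apply/ffunP => c1; rewrite !ffunE.
- move=> k p c1 c1D; rewrite ffunE.
  have -> : (c1 == c) = false by apply: contraNF c1D => /eqP ->.
  by apply: hk0'; rewrite inE (negbTE c1D) andbF.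
move=> k p q hp hq eqk c1 c1D.
have eqk' : key' k p = key' k q.
  apply/ffunP => c2; have [->|ne] := eqVneq c2 c.
    by rewrite !hk0' // !inE eqxx.
  by move: (congr1 (fun f : KT => f c2) eqk); rewrite !ffunE (negbTE ne).
have low : forall a b, upd k a \in Yo T -> upd k b \in Yo T -> key' k a = key' k b ->
    forall c', c' \in Cv -> #|Tc c'| < #|Tc c| -> w k c' a b \in Yo (Tc c').
  move=> a b ha hb eab c' c'Cv lt; apply: hkey' => //.
  rewrite !inE (Dcl c c' cD c'Cv lt) andbT.
  by apply: contraTneq lt => ->; rewrite ltnn.
have [->|ne] := eqVneq c1 c; last first.
  by apply: hkey' => //; rewrite !inE ne c1D.
have cCv : c \in Cv := subsetP DCv c cD.
have rq : rep k q = rep k p.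
  rewrite /rep -eqk'; case: pickP => [//|/(_ p)]; by rewrite hp eqxx.
set r := rep k p.
have [hr hrk] : upd k r \in Yo T /\ key' k r = key' k p.
  rewrite /r /rep; case: pickP => [q0 /andP [h1 /eqP h2] | /(_ p)] //=; by rewrite hp eqxx.
have Y1 := sub_cond cCv hr hp (low _ _ hr hp hrk).
have Y2 := sub_cond cCv hp hq (low _ _ hp hq eqk').
have Y3 := sub_cond cCv hr hq (low _ _ hr hq (etrans hrk eqk')).
have add := add_cond cCv Y1 Y2 Y3.
have encE : F _ (w k c r p) = F _ (w k c r q).
  move: (congr1 (fun f : KT => f c) eqk); rewrite !ffunE eqxx rq.
  exact: enc_inj.
apply/(HF Y2).1.
by rewrite -(addKr (F _ (w k c r p)) (F _ (w k c p q))) add -encE addNr.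
Qed.


Lemma card_Cv : #|Cv| = 3 ^ #|T|.
Proof.
rewrite /Cv cardsXn (eq_bigr (fun i => if i \in T then 3 else 1)).
  by rewrite -big_mkcond prod_nat_const.
move=> i _; case: ifP => _; last by rewrite cards1.
by rewrite cardsT card_option card_bool.
Qed.

Definition ctop : Cty := [ffun => None].
Lemma Tc_top : Tc ctop = S.
Proof. by apply/setP => i; rewrite !inE ffunE eqxx andbT. Qed.
Lemma ctopCv : ctop \in Cv.
Proof. by apply/CvP => i _; rewrite ffunE. Qed.

Lemma step_nat :
  (#|Yo T| ^ 2 * #|Xbar X S| <= #|Yo S| * #|Xbar X T| ^ 2 * cardA ^ (3 ^ #|T|))%N
  /\ (0 < #|Yo T| -> 0 < #|Xbar X S|)%N.
Proof.
have [key [R [hR hkR hk0 hkey]]] :=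
  key_ex (erefl #|Cv|) (subxx Cv) (fun c c' _ h _ => h).
rewrite card_Cv in hR.
case: (pickP (fun _ : X s => true)) => [ps _ | Xs0]; last first.
  have N0 : #|Xbar X T| = 0.
    by apply: eq_card0 => y; have := Xs0 (pi0 (y s)).
  have a0 : #|Yo T| = 0.
    by apply/eqP; rewrite -leqn0 -N0; apply: max_card.
  by rewrite a0.
pose kap y := upd y ps.
pose g y := (kap y, key (kap y) (pi0 (y s))).
set P := [set yy in setX (Yo T) (Yo T) | g yy.1 == g yy.2].
have CS := pairs_card (Yo T) g.
pose h (yy : Xbar X T * Xbar X T) :=
  emb S (wu (kap yy.1) ctop (pi0 (yy.1 s)) (pi0 (yy.2 s))).
have kapK : forall y, upd (kap y) (pi0 (y s)) = y.
  by move=> y; rewrite /kap upd_upd upd_self.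
have gE : forall y1 y2, g y1 = g y2 ->
    kap y1 = kap y2 /\ key (kap y1) (pi0 (y1 s)) = key (kap y1) (pi0 (y2 s)).
  by move=> y1 y2 [e1 e2]; split=> //; rewrite e2 e1.
have hP : #|P| <= #|Yo S|.
  rewrite -(@card_in_imset _ _ h).
    apply: subset_leq_card; apply/subsetP => x /imsetP [[y1 y2] yyP ->].
    move: yyP; rewrite !inE /= => /andP [/andP [y1Y y2Y] /eqP /gE [ek ekey]].
    have hw : w (kap y1) ctop (pi0 (y1 s)) (pi0 (y2 s)) \in Yo (Tc ctop).
      apply: (hkey _ _ _ _ _ ekey _ ctopCv); first by rewrite kapK.
      by rewrite ek kapK.
    have tr : forall V V', V = V' -> forall u, emb V u \in Yo V -> emb V' u \in Yo V'.
      by move=> V V' ->.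
    exact: (tr _ _ Tc_top _ hw).
  move=> [y1 y2] [y1' y2'] P1 P2 eqh.
  move: P1 P2; rewrite !inE /= => /andP [_ /eqP /gE [ek _]] /andP [_ /eqP /gE [ek' _]].
  have e0 : forall i, pi0 (h (y1, y2) i) = pi0 (h (y1', y2') i) by rewrite eqh.
  have e1 : forall i, pi1 (h (y1, y2) i) = pi1 (h (y1', y2') i) by rewrite eqh.
  have ep : pi0 (y1 s) = pi0 (y1' s).
    by have := e0 s; rewrite /h !pi0_emb !wu_s.
  have eq2 : pi0 (y2 s) = pi0 (y2' s).
    by have := e1 s; rewrite /h !pi1_emb hs !wu_s.
  have ekap : kap y1 = kap y1'.
    apply: Xbar_ext => i; have [->|ne] := eqVneq i s.
      by rewrite /kap !pi0_upd_s !pi1_upd_s.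
    have a0 := e0 i; have a1 := e1 i.
    rewrite /h !pi0_emb !pi1_emb !wu_ne // ffunE /liftx /= in a0 a1.
    split => //; case iS: (i \in S) a1 => //= _.
    have iT : i \notin T by rewrite !inE iS andbF.
    by rewrite (pi1_notin (kap y1 i) iT) (pi1_notin (kap y1' i) iT).
  have ey1 : y1 = y1' by rewrite -(kapK y1) -(kapK y1') ekap ep.
  have ey2 : y2 = y2'.
    by rewrite -(kapK y2) -(kapK y2') -ek -ek' ekap eq2.
  by rewrite ey1 ey2.
have hG : #|g @: Yo T| <= #|kap @: [set: Xbar X T]| * #|R|.
  rewrite -cardsX; apply: subset_leq_card; apply/subsetP => _ /imsetP [y _ ->].
  by apply/setXP; split; [apply: imset_f; rewrite inE | apply: hkR].
have hK : #|kap @: [set: Xbar X T]| * #|X s| <= #|Xbar X T|.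
  rewrite -(cardsT (X s)) -cardsX.
  apply: (@leq_card_in _ _ (fun kp : Xbar X T * X s => upd kp.1 kp.2)).
  move=> [k p] [k' p'] /setXP [/imsetP [y _ ->] _] /setXP [/imsetP [y' _ ->] _] /= e.
  have ep : p = p' by have := congr1 (fun x : Xbar X T => pi0 (x s)) e; rewrite !pi0_upd_s.
  rewrite -ep in e *; have := congr1 (fun x => upd x ps) e.
  by rewrite /kap !upd_upd => ->.
have hM : #|Xbar X S| <= #|Xbar X T| * #|X s|.
  rewrite -card_prod.
  apply: (@leq_card _ _ (fun x : Xbar X S =>
     (emb T (setc (liftx x) (dup (pi0 (x s)))), pi1 (x s)))).
  move=> x x' [e1 e2]; apply: Xbar_ext => i.
  have e0 : forall i, pi0 (emb T (setc (liftx x) (dup (pi0 (x s)))) i)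
     = pi0 (emb T (setc (liftx x') (dup (pi0 (x' s)))) i) by rewrite e1.
  have e1' : forall i, pi1 (emb T (setc (liftx x) (dup (pi0 (x s)))) i)
     = pi1 (emb T (setc (liftx x') (dup (pi0 (x' s)))) i) by rewrite e1.
  have [->|ne] := eqVneq i s.
    by split=> //; have := e0 s; rewrite !pi0_emb !setc_s.
  have := e0 i; have := e1' i.
  rewrite !pi0_emb !pi1_emb !setc_ne // /liftx /=.
  case iT: (i \in T) => /= h1 h0; split => //.
  have iS : i \notin S by move: iT; rewrite !inE ne /= => ->.
  by rewrite (pi1_notin (x i) iS) (pi1_notin (x' i) iS).
split.
  have := leq_mul (leq_mul (leq_trans CS (leq_mul hP hG)) (leqnn 1)) hM.
  move: hK (leq_trans hR (leqnn _)) => hK hR' hh.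
  apply: leq_trans; first by rewrite muln1 in hh; exact: hh.
  set a := #|Yo S|; set Kc := #|kap @: _|; set r := #|R|; set N := #|Xbar X T|.
  set m := #|X s|; set K := cardA ^ _.
  rewrite muln1.
  have -> : a * (Kc * r) * (N * m) = a * r * N * (Kc * m) by lia.
  have -> : a * N ^ 2 * K = a * K * N * N by lia.
  by apply: leq_mul => //; apply: leq_mul => //; apply: leq_mul.
move=> apos; apply: leq_trans (max_card (mem (Yo S))).
apply: leq_trans hP.
have : 0 < #|P| * #|g @: Yo T|.
  by apply: leq_trans CS; rewrite expn_gt0 apos.
by rewrite muln_gt0 => /andP [].
Qed.


Lemma cardA_pos : 0 < cardA.
Proof.
apply: leq_trans (cardA_ge set0).
by apply/card_gt0P; exists 0%R.
Qed.

Lemma step : ((density (Yo T)) ^+ 2 / (cardA%:R ^+ (3 ^ #|T|)) <= density (Yo S))%R.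
Proof.
have [h1 h2] := step_nat.
rewrite /density.
case: (posnP #|Yo T|) => [a0|apos].
  rewrite a0 mul0r expr0n /= mul0r; apply: divr_ge0; apply: ler0n.
have Mpos := h2 apos.
have Npos : 0 < #|Xbar X T| := leq_trans apos (max_card _).
have Kpos : 0 < cardA ^ (3 ^ #|T|) by rewrite expn_gt0 cardA_pos.
rewrite -natrX; exact: rat_ineq.
Qed.

End Main.

Local Open Scope ring_scope.

Theorem proposition3p2 (d : nat) (X : 'I_d -> finType)
  (A : {set 'I_d} -> finZmodType)
  (Y Yo : forall S : {set 'I_d}, {set Xbar X S})
  (F : forall S : {set 'I_d}, Xbar X S -> A S) :
  @additive_restrictive_system d X A Y Yo F ->
  let delta := density (Yo set0) in
  let cardA := (\max_(S : {set 'I_d}) #|A S|)%N in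
  forall S : {set 'I_d},
    delta ^+ (2 ^ #|S|) / (cardA%:R) ^+ (3 ^ #|S|) <= density (Yo S).
Proof.
move=> [HYo [HF [HY Hadd]]] delta cA S.
have cApos : (0 < cA)%N := cardA_pos A.
have dge0 : 0 <= delta by rewrite /delta /density divr_ge0 ?ler0n.
suff main : forall n (S0 : {set 'I_d}), #|S0| = n ->
    delta ^+ (2 ^ n) / (cA%:R) ^+ (3 ^ n) <= density (Yo S0) by exact: main.
elim => [|n IH] S0 hS.
  move/eqP: hS; rewrite cards_eq0 => /eqP ->.
  rewrite !expn0 !expr1 -/delta ler_pdivrMr ?ltr0n //.
  by rewrite ler_peMr // ler1n.
have [s sS] : exists s, s \in S0 by apply/set0Pn; rewrite -cards_eq0 hS.
have hT : #|S0 :\ s| = n by move: hS; rewrite (cardsD1 s) sS => -[].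
have st := step HYo HF HY Hadd sS.
rewrite hT in st.
have ih := IH _ hT.
set b := delta ^+ (2 ^ n) / cA%:R ^+ (3 ^ n) in ih.
have bge0 : 0 <= b by rewrite /b divr_ge0 ?exprn_ge0 ?ler0n.
apply: le_trans st.
have -> : delta ^+ (2 ^ n.+1) / cA%:R ^+ (3 ^ n.+1) = b ^+ 2 / cA%:R ^+ (3 ^ n).
  by rewrite pow_id.
apply: ler_wpM2r; first by rewrite invr_ge0 exprn_ge0 ?ler0n.
by rewrite !expr2 ler_pM.
Qed.
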